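(* Let $f:\{0,1\}^n\to\mathbb{R}$, $c$ in the image of $f$, and $I\subset[1..n]$. Let $Z=\{z\in\{0,1\}^n\mid z_i=0 \text{ for all } i\notin I\}$. Assume that for all $y\in\{0,1\}^n$ with $f(y)\le c$ we have $f(y\oplus z)=f(y)$ for all $z\in Z$. Then for any $(\mu+\lambda)$-elitist unary unbiased black-box algorithm optimizing $f$, any $t\ge 0$ and any $k\in[1..\mu]$, conditioned on the event $E_{t,c}=\{\max_{j\in[1..\mu]} f(x^{(t,j)})=c\}$, the bits $x^{(t,k)}_i$, $i\in I$, are mutually independent, independent of all other bits of $x^{(t,k)}$, and uniformly distributed in $\{0,1\}$.
   Context: A unary unbiased variation operator $V$ assigns to each $x\in\{0,1\}^n$ a probability distribution $V(x)$ on $\{0,1\}^n$ such that for all $x,y,z$, $\Pr[y=V(x)]=\Pr[y\oplus z=V(x\oplus z)]$, and for all permutations $\sigma$ of $[1..n]$, $\Pr[y=V(x)]=\Pr[\sigma(y)=V(\sigma(x))]$, where $\sigma(x)=(x_{\sigma(1)},\dots,x_{\sigma(n)})$. A $(\mu+\lambda)$-elitist unary unbiased black-box algorithm: generate $\mu$ search points $x^{(0,1)},\dots,x^{(0,\mu)}$ independently and uniformly at random and let $X$ be this population. In each iteration $t=1,2,\dots$, choose $\lambda$ individuals $p_1,\dots,p_\lambda$ from $X$ and $\lambda$ unary unbiased variation operators $V_1,\dots,V_\lambda$, sample $q_j\sim V_j(p_j)$, and let the new $X$ be a selection of $\mu$ best individuals of $X\cup\{q_1,\dots,q_\lambda\}$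 (ties broken arbitrarily). All choices (parents, operators, selection among ties) may depend only on the fitness values of the search points generated so far. The population after iteration $t$ is denoted $x^{(t,1)},\dots,x^{(t,\mu)}$. *)

(* Defs.v *)
From HB Require Import structures.
From mathcomp Require Import all_boot all_order all_algebra all_fingroup.
From mathcomp Require Import reals.
Set Implicit Arguments. Unset Strict Implicit. Unset Printing Implicit Defensive.
Import Order.TTheory GRing.Theory Num.Theory.
Local Open Scope ring_scope.

Section EA.
Variables (R : realType) (n : nat).

Definition bits := {ffun 'I_n -> bool}.
Definition bxor (x z : bits) : bits := [ffun i => x i (+) z i].
Definition bperm (s : 'S_n) (x : bits) : bits := [ffun i => x (s i)].

(* V x y = Pr[y = V(x)] : a unary unbiased variation operator *)
Definition unbiased_op (V : bits -> bits -> R) : Prop :=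
  [/\ forall x y, 0 <= V x y,
      forall x, \sum_(y : bits) V x y = 1,
      forall x y z, V x y = V (bxor x z) (bxor y z) &
      forall (s : 'S_n) x y, V x y = V (bperm s x) (bperm s y)].

Variables (mu lam : nat).

(* A (deterministic, given its random seed) (mu+lam)-elitist unary unbiased
   algorithm.  All choices depend only on the history [h : seq R] of fitness
   values of all search points generated so far (in order of generation).
   - par h j : the population slot of the parent of the j-th offspring
   - op  h j : the variation operator used for the j-th offspring
   - sel h w : the selection; w is the fitness vector of X \cup {q_1..q_lam}
     (slots 0..mu-1 = current population, mu.. = offspring), which is itself a
     function of the history; new slot j receives combined element sel h w j. *)
Record elitist_alg := EliAlg {
  par : seq R -> 'I_lam -> 'I_mu ;
  op  : seq R -> 'I_lam -> bits -> bits -> R ;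
  sel : seq R -> ('I_(mu + lam) -> R) -> 'I_mu -> 'I_(mu + lam) }.

Definition valid_alg (A : elitist_alg) : Prop :=
  (forall h j, unbiased_op (op A h j)) /\
  (forall h (w : 'I_(mu + lam) -> R),
      injective (sel A h w) /\
      forall (i : 'I_mu) (k : 'I_(mu + lam)),
        k \notin codom (sel A h w) -> w k <= w (sel A h w i)).

Definition comb (pop : {ffun 'I_mu -> bits}) (q : {ffun 'I_lam -> bits})
    (i : 'I_(mu + lam)) : bits :=
  match split i with inl j => pop j | inr k => q k end.

Variable f : bits -> R.

(* state = (population, fitness history, probability weight of the trajectory) *)
Definition step (A : elitist_alg) (st : {ffun 'I_mu -> bits} * seq R * R)
    (q : {ffun 'I_lam -> bits}) : {ffun 'I_mu -> bits} * seq R * R :=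
  let: (pop, h, w) := st in
  let w' := w * \prod_(j < lam) op A h j (pop (par A h j)) (q j) in
  let h' := h ++ [seq f (q k) | k <- enum 'I_lam] in
  let pop' := [ffun j => comb pop q (sel A h (fun i => f (comb pop q i)) j)] in
  (pop', h', w').

(* trajectory: initial population x0 (uniform, independent) and offspring qs *)
Definition run (A : elitist_alg) (x0 : {ffun 'I_mu -> bits})
    (qs : seq {ffun 'I_lam -> bits}) :=
  foldl (step A) (x0, [seq f (x0 j) | j <- enum 'I_mu],
                  (((2%:R : R)^-1) ^+ n) ^+ mu) qs.

(* Pr[ P(population after iteration t) ], for a randomized algorithm given as a
   random seed om ~ pw choosing a deterministic-choice algorithm A om *)
Definition prob_pop (Omega : finType) (pw : Omega -> R)
    (A : Omega -> elitist_alg) (t : nat) (P : {ffun 'I_mu -> bits} -> bool) : R :=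
  \sum_(om : Omega) pw om *
    \sum_(x0 : {ffun 'I_mu -> bits}) \sum_(qs : t.-tuple {ffun 'I_lam -> bits})
      (let st := run (A om) x0 qs in if P st.1.1 then st.2 else 0).

Definition cond (Pr : ({ffun 'I_mu -> bits} -> bool) -> R)
    (P E : {ffun 'I_mu -> bits} -> bool) : R :=
  Pr (fun X => P X && E X) / Pr E.

Definition max_fit_is (c : R) (X : {ffun 'I_mu -> bits}) : bool :=
  [forall j, f (X j) <= c] && [exists j, f (X j) == c].

End EA.

(* Main.v *)
Require Import Defs.
From HB Require Import structures.
From mathcomp Require Import all_boot all_order all_algebra all_fingroup.
From mathcomp Require Import reals.
From Stdlib Require Import FunctionalExtensionality.
Set Implicit Arguments. Unset Strict Implicit. Unset Printing Implicit Defensive.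
Import Order.TTheory GRing.Theory Num.Theory.
Local Open Scope ring_scope.

Section Aux.
Variables (R : realType) (n mu lam : nat) (f : bits n -> R) (c : R) (I : {set 'I_n}).
Hypothesis Hf : forall y : bits n, f y <= c ->
     forall z : bits n, (forall i, i \notin I -> z i = false) ->
       f (bxor y z) = f y.
Variable z : bits n.
Hypothesis Hz : forall i, i \notin I -> z i = false.

Definition popxor (X : {ffun 'I_mu -> bits n}) : {ffun 'I_mu -> bits n} :=
  [ffun j => bxor (X j) z].
Definition qxor (q : {ffun 'I_lam -> bits n}) : {ffun 'I_lam -> bits n} :=
  [ffun j => bxor (q j) z].

Lemma bxorK (x : bits n) : bxor (bxor x z) z = x.
Proof. by apply/ffunP => i; rewrite !ffunE addbK. Qed.

Lemma popxorK : cancel popxor popxor.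
Proof. by move=> X; apply/ffunP => j; rewrite !ffunE bxorK. Qed.
Lemma qxorK : cancel qxor qxor.
Proof. by move=> X; apply/ffunP => j; rewrite !ffunE bxorK. Qed.

Lemma fz_le (y : bits n) : f (bxor y z) <= c -> f y <= c.
Proof. by move=> H; have := Hf H Hz; rewrite bxorK => ->. Qed.

Lemma E_xor (X : {ffun 'I_mu -> bits n}) :
  max_fit_is f c (popxor X) = max_fit_is f c X.
Proof.
have H1 : forall Y, max_fit_is f c Y -> max_fit_is f c (popxor Y).
  move=> Y /andP [/forallP Hle Hex]; have Heq : forall j, f (popxor Y j) = f (Y j).
    by move=> j; rewrite ffunE Hf.
  apply/andP; split; first by apply/forallP => j; rewrite Heq.
  by case/existsP: Hex => j Hj; apply/existsP; exists j; rewrite Heq.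
apply/idP/idP; last exact: H1.
by move=> /H1; rewrite popxorK.
Qed.

Definition goodq (q : {ffun 'I_lam -> bits n}) := [forall j, f (q j) <= c].

Lemma comb_xor pop q i : comb (popxor pop) (qxor q) i = bxor (comb pop q i) z.
Proof. by rewrite /comb; case: split => j; rewrite ffunE. Qed.

Variable A : elitist_alg R n mu lam.
Hypothesis HA : valid_alg A.

Lemma step_xor (pop : {ffun 'I_mu -> bits n}) (h : seq R) (w : R) q : (forall j, f (pop j) <= c) -> goodq q ->
  let st' := step f A (pop, h, w) q in
  step f A (popxor pop, h, w) (qxor q) = (popxor st'.1.1, st'.1.2, st'.2)
  /\ forall j, f (st'.1.1 j) <= c.
Proof.
move=> Hp /forallP Hq /=.
have Hc : forall i, f (comb pop q i) <= c.
  by move=> i; rewrite /comb; case: split.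
have Hw : (fun i => f (comb (popxor pop) (qxor q) i)) = (fun i => f (comb pop q i)).
  by apply: functional_extensionality => i; rewrite comb_xor Hf.
split; last by move=> j; rewrite ffunE.
rewrite Hw; congr (_, _, _).
- by apply/ffunP => j; rewrite !ffunE comb_xor.
- by congr (_ ++ _); apply: eq_map => k; rewrite ffunE Hf.
- congr (_ * _); apply: eq_bigr => j _.
  case: HA => Hop _; case: (Hop h j) => _ _ Hx _.
  by rewrite !ffunE -Hx.
Qed.

Lemma foldl_xor qs (pop : {ffun 'I_mu -> bits n}) (h : seq R) (w : R) : (forall j, f (pop j) <= c) -> all goodq qs ->
  let st' := foldl (step f A) (pop, h, w) qs in
  foldl (step f A) (popxor pop, h, w) (map qxor qs) = (popxor st'.1.1, st'.1.2, st'.2).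
Proof.
elim: qs pop h w => [|q qs IH] pop h w Hp; first by [].
case/andP=> Hq Hqs.
have fc : forall st x s, foldl (step f A) st (x :: s) = foldl (step f A) (step f A st x) s by [].
rewrite map_cons !fc.
have [-> Hp'] := step_xor h w Hp Hq.
case E1: (step f A (pop, h, w) q) Hp' => [[pop' h'] w'] /= Hp'.
exact: IH.
Qed.

Variable k0 : 'I_mu.

Lemma step_cover (pop : {ffun 'I_mu -> bits n}) (h : seq R) (w : R) q (m : 'I_(mu + lam)) :
  exists j, f (comb pop q m) <= f ((step f A (pop, h, w) q).1.1 j).
Proof.
rewrite /=.
set W := (fun i => f (comb pop q i)).
case: HA => _ /(_ h W) [Hinj Hel].
case: (boolP (m \in codom (sel A h W))) => Hm.
  case/codomP: Hm => j ->; exists j; by rewrite ffunE.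
exists k0; rewrite ffunE; exact: Hel.
Qed.

Lemma foldl_cover qs (st : {ffun 'I_mu -> bits n} * seq R * R) v : (exists j, v <= f (st.1.1 j)) ->
  exists j, v <= f ((foldl (step f A) st qs).1.1 j).
Proof.
elim: qs st => [|q qs IH] [[pop h] w] //= [j Hj].
apply: IH; have [j' Hj'] := step_cover pop h w q (lshift lam j).
exists j'; apply: le_trans Hj (le_trans _ Hj').
by rewrite /comb -[lshift lam j]/(unsplit (inl j : 'I_mu + 'I_lam)) unsplitK.
Qed.

Lemma foldl_cover_q (qs : seq {ffun 'I_lam -> bits n}) (st : {ffun 'I_mu -> bits n} * seq R * R) v : (exists2 q, q \in qs & exists j, v <= f (q j)) ->
  exists j, v <= f ((foldl (step f A) st qs).1.1 j).
Proof.
elim: qs st => [|q qs IH] [[pop h] w] [q' //=].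
rewrite inE => /orP [/eqP -> | Hin] [j Hj] /=.
  apply: foldl_cover; have [j' Hj'] := step_cover pop h w q (rshift mu j).
  exists j'; apply: le_trans Hj (le_trans _ Hj').
  by rewrite /comb -[rshift mu j]/(unsplit (inr j : 'I_mu + 'I_lam)) unsplitK.
by apply: IH; exists q' => //; exists j.
Qed.

End Aux.

Section Main.
Variables (R : realType) (n mu lam : nat) (f : bits n -> R) (c : R) (I : {set 'I_n}).
Hypothesis Hf : forall y : bits n, f y <= c ->
     forall z : bits n, (forall i, i \notin I -> z i = false) ->
       f (bxor y z) = f y.
Variable k0 : 'I_mu.

Definition goodt (x0 : {ffun 'I_mu -> bits n}) (qs : seq {ffun 'I_lam -> bits n}) :=
  [forall j, f (x0 j) <= c] && all (goodq f c) qs.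

Lemma notgood_E (A : elitist_alg R n mu lam) (HA : valid_alg A) x0 qs :
  ~~ goodt x0 qs -> ~~ max_fit_is f c (run f A x0 qs).1.1.
Proof.
move=> Hng.
suff [v [Hv [j Hj]]] : exists v, c < v /\ exists j, v <= f ((run f A x0 qs).1.1 j).
  apply/negP => /andP [/forallP /(_ j) Hle _].
  by move: (lt_le_trans Hv (le_trans Hj Hle)); rewrite ltxx.
rewrite /goodt negb_and in Hng; case/orP: Hng.
  rewrite negb_forall => /existsP [j]; rewrite -ltNge => Hj.
  exists (f (x0 j)); split => //.
  by rewrite /run; apply: foldl_cover => //; exists j.
case/allPn => q Hq; rewrite negb_forall => /existsP [j]; rewrite -ltNge => Hj.
exists (f (q j)); split => //.
by rewrite /run; apply: foldl_cover_q => //; exists q => //; exists j.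
Qed.

Lemma traj (A : elitist_alg R n mu lam) (HA : valid_alg A) (z : bits n)
  (Hz : forall i, i \notin I -> z i = false) x0 qs P :
  (let st := run f A (popxor z x0) (map (qxor z) qs) in
     if P st.1.1 && max_fit_is f c st.1.1 then st.2 else 0)
  = (let st := run f A x0 qs in
     if P (popxor z st.1.1) && max_fit_is f c st.1.1 then st.2 else 0).
Proof.
case: (boolP (goodt x0 qs)) => Hg.
  have /andP [/forallP Hx0 Hqs] := Hg.
  have Hh : [seq f (popxor z x0 j) | j <- enum 'I_mu] = [seq f (x0 j) | j <- enum 'I_mu].
    by apply: eq_map => j; rewrite ffunE Hf.
  rewrite /run Hh (foldl_xor Hf Hz HA) //=.
  by rewrite (E_xor Hf Hz).
have Hg' : ~~ goodt (popxor z x0) (map (qxor z) qs).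
  apply: contra Hg => /andP [/forallP Hx0 Hqs]; apply/andP; split.
    apply/forallP => j; apply: (fz_le Hf Hz); move: (Hx0 j); by rewrite ffunE.
  apply/allP => q Hq; have := allP Hqs (qxor z q) (map_f _ Hq).
  move/forallP => H; apply/forallP => j; apply: (fz_le Hf Hz); move: (H j); by rewrite ffunE.
by rewrite /= (negbTE (notgood_E HA Hg)) (negbTE (notgood_E HA Hg')) !andbF.
Qed.
End Main.

Lemma Pr_ext (R : realType) (n mu lam : nat) (f : bits n -> R) (Omega : finType)
  (pw : Omega -> R) (A : Omega -> elitist_alg R n mu lam) t (P P' : pred {ffun 'I_mu -> bits n}) :
  P =1 P' -> prob_pop f pw A t P = prob_pop f pw A t P'.
Proof. by move=> H; rewrite (functional_extensionality _ _ H). Qed.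

Lemma Pr_big (R : realType) (n mu lam : nat) (f : bits n -> R) (Omega : finType)
  (pw : Omega -> R) (A : Omega -> elitist_alg R n mu lam) t
  (J : finType) (D : pred J) (Pj : J -> pred {ffun 'I_mu -> bits n}) (P : pred {ffun 'I_mu -> bits n}) :
  (forall X, P X = [exists j, D j && Pj j X]) ->
  (forall X j1 j2, D j1 -> D j2 -> Pj j1 X -> Pj j2 X -> j1 = j2) ->
  prob_pop f pw A t P = \sum_(j | D j) prob_pop f pw A t (Pj j).
Proof.
move=> HP Hu; rewrite /prob_pop exchange_big /=; apply: congr_big => // om _.
rewrite -mulr_sumr; congr (_ * _); rewrite [RHS]exchange_big; apply: eq_bigr => x0 _.
rewrite [RHS]exchange_big; apply: eq_bigr => qs _ /=.
set X := (run f (A om) x0 qs).1.1; set w := (run f (A om) x0 qs).2.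
rewrite HP; case: (boolP [exists j, D j && Pj j X]).
  case/existsP => j /andP [Dj Pjj]; rewrite (bigD1 j) //= Pjj big1 ?addr0 //.
  move=> j' /andP [Dj' Hne]; case: ifP => // Pj'.
  by rewrite (Hu X j' j Dj' Dj Pj' Pjj) eqxx in Hne.
rewrite negb_exists => /forallP H; rewrite big1 // => j Dj.
by move: (H j); rewrite Dj /= => /negbTE ->.
Qed.

Lemma shift (R : realType) (n mu lam : nat) (f : bits n -> R) (c : R) (I : {set 'I_n})
  (Hf : forall y : bits n, f y <= c ->
     forall z : bits n, (forall i, i \notin I -> z i = false) ->
       f (bxor y z) = f y) (k0 : 'I_mu) (Omega : finType)
  (pw : Omega -> R) (A : Omega -> elitist_alg R n mu lam) (HA : forall om, valid_alg (A om)) t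
  (z : bits n) (Hz : forall i, i \notin I -> z i = false) (P : pred {ffun 'I_mu -> bits n}) :
  prob_pop f pw A t (fun X => P X && max_fit_is f c X) =
  prob_pop f pw A t (fun X => P (popxor z X) && max_fit_is f c X).
Proof.
rewrite /prob_pop; apply: eq_bigr => om _; congr (_ * _).
rewrite (reindex_inj (can_inj (popxorK z))); apply: eq_bigr => x0 _.
have Hc : cancel (fun qs : t.-tuple {ffun 'I_lam -> bits n} => map_tuple (qxor z) qs)
                 (fun qs => map_tuple (qxor z) qs).
  move=> qs; apply: val_inj => /=; rewrite -map_comp (eq_map (qxorK z)) map_id //.
rewrite (reindex_inj (can_inj Hc)); apply: eq_bigr => qs _.
exact: (traj Hf k0 (HA om) Hz).
Qed.


Theorem lemma4 (R : realType) (n mu lam : nat) (f : bits n -> R) (c : R)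
    (I : {set 'I_n}) :
  (exists y, f y = c) ->
  (forall y : bits n, f y <= c ->
     forall z : bits n, (forall i, i \notin I -> z i = false) ->
       f (bxor y z) = f y) ->
  forall (Omega : finType) (pw : Omega -> R)
         (A : Omega -> elitist_alg R n mu lam),
  (forall om, 0 <= pw om) -> \sum_(om : Omega) pw om = 1 ->
  (forall om, valid_alg (A om)) ->
  forall (t : nat) (k : 'I_mu),
  let Pr := prob_pop f pw A t in
  let E := max_fit_is f c in
  0 < Pr E ->
  (forall i, i \in I -> forall b : bool,
      cond Pr (fun X => X k i == b) E = 1 / 2) /\
  (forall x : bits n,
      cond Pr (fun X => X k == x) E =
        (\prod_(i in I) cond Pr (fun X => X k i == x i) E) *
        cond Pr (fun X => [forall i in ~: I, X k i == x i]) E).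
Proof.
move=> _ Hf Omega pw A _ _ HA t k Pr E HPE.
have HPE0 : Pr E != 0 by rewrite gt_eqF.
have P1 : forall i, i \in I -> forall b : bool,
      cond Pr (fun X => X k i == b) E = 1 / 2.
  move=> i Hi b.
  set zi : bits n := [ffun j => j == i].
  have Hzi : forall j, j \notin I -> zi j = false.
    move=> j Hj; rewrite ffunE; apply/eqP => Hji; by rewrite Hji Hi in Hj.
  have Hsym : Pr (fun X => (X k i == b) && E X) = Pr (fun X => (X k i == ~~ b) && E X).
    rewrite /Pr /E (shift Hf k pw HA t Hzi); apply: Pr_ext => X.
    by rewrite !ffunE eqxx; case: (X k i); case: b.
  have Hsum : Pr E = Pr (fun X => (X k i == b) && E X) + Pr (fun X => (X k i == ~~ b) && E X).
    rewrite /Pr (@Pr_big _ _ _ _ f _ pw A t bool predT (fun bb X => (X k i == (if bb then b else ~~ b)) && E X) E).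
    - by rewrite big_bool.
    - move=> X; apply/idP/existsP.
        by move=> HX; exists (X k i == b); case: (X k i); case: (b); rewrite /= HX.
      by case=> bb /andP [_ /andP [_ ->]].
    - move=> X [] [] //= _ _ /andP [/eqP -> _] /andP [/eqP]; by case: (b).
  rewrite /cond Hsum -Hsym.
  have HQ : Pr (fun X => (X k i == b) && E X) != 0.
    by apply: contra HPE0 => /eqP H; rewrite Hsum -Hsym H addr0.
  rewrite -mulr2n; set Q := Pr _; rewrite -(mulr_natr Q 2) invfM mulrA divff //.
split=> // x.
rewrite (eq_bigr (fun=> 1 / 2)); last by move=> i Hi; apply: P1.
rewrite prodr_const /cond.
set Q := Pr (fun X => (X k == x) && E X).
have Hag : Pr (fun X => [forall i in ~: I, X k i == x i] && E X)
           = Q *+ #|pffun_on false (mem I) (@predT bool)|.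
  rewrite /Pr (@Pr_big _ _ _ _ f _ pw A t (bits n) (fun z => z \in pffun_on false (mem I) (@predT bool))
     (fun z X => (X k == bxor x z) && E X)).
  - rewrite -sumr_const; apply: eq_bigr => z /pffun_onP [Hsup _].
    have Hz : forall i, i \notin I -> z i = false.
      move=> i HiI; apply/negP => Hzi; move/subsetP: Hsup => /(_ i).
      by rewrite inE Hzi => /(_ isT); apply/negP.
    rewrite /Q /Pr (shift Hf k pw HA t Hz); apply: Pr_ext => X /=.
    rewrite ffunE; congr (_ && _); apply/eqP/eqP => [H|->] //.
    by have := congr1 (fun y => bxor y z) H; rewrite !bxorK.
  - move=> X; apply/andP/existsP.
      case=> Hall HE; exists (bxor (X k) x); apply/andP; split.
        apply/pffun_onP; split; last by move=> ? _.
        apply/subsetP => i; rewrite inE ffunE => Hi; apply: contraR Hi => HiI.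
        have := forallP Hall i; rewrite inE HiI /= => /eqP ->; by rewrite addbb.
      rewrite HE andbT; apply/eqP/ffunP => i; rewrite !ffunE.
      by case: (x i); case: (X k i).
    case=> z /andP [/pffun_onP [Hsup _] /andP [/eqP HX HE]]; split => //.
    apply/forallP => i; apply/implyP; rewrite inE => HiI; rewrite HX ffunE.
    have Hzi : z i = false.
      apply/negP => Hzi; move/subsetP: Hsup => /(_ i).
      by rewrite inE Hzi => /(_ isT); rewrite (negbTE HiI).
    by rewrite Hzi addbF.
  - move=> X z1 z2 _ _ /andP [/eqP H1 _] /andP [/eqP H2 _].
    apply/ffunP => i; have := congr1 (fun g : bits n => g i) (etrans (esym H1) H2).
    by rewrite !ffunE => /(congr1 (addb (x i))); rewrite !addKb.
rewrite Hag card_pffun_on card_bool -[Q *+ _]mulr_natr natrX.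
set a : R := (2%:R ^+ #|mem I|).
have Ha : a != 0 by rewrite expf_neq0 // pnatr_eq0.
by rewrite div1r exprVn -/a -mulrA mulrCA mulKf.
Qed.
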